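(* Let $s,t$ be real numbers with $t\ge s>0$, and define $K_0=1$, $K_1=t$, $K_2=t^2$, and $K_n = tK_{n-1}+s^2K_{n-2}$ for $n\ge 3$. Then $K_n \ge M_n$ for every integer $n\ge 0$.
   Context: For a real number $s$, a positive integer $n$ and a set $P \subseteq \mathbb{R}$, $\mathcal{G}_s^{n\times n}(P)$ denotes the set of all $n\times n$ real upper Hessenberg matrices $A=(a_{ij})$ with $a_{i+1,i} = s$ for $1\le i\le n-1$, $a_{ij}=0$ for $i > j+1$, and $a_{ij}\in P$ for all $i \le j$. For $n\ge 1$, $M_n$ is the maximum of $|\det A|$ over $A\in\mathcal{G}_s^{n\times n}([0,t])$, and $M_0 := 1$. *)

(* Defs.v *)
From mathcomp Require Import all_boot all_order all_algebra.
Set Implicit Arguments. Unset Strict Implicit. Unset Printing Implicit Defensive.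
Import Order.TTheory GRing.Theory Num.Theory.
Local Open Scope ring_scope.

(* G_s^{n x n}(P): upper Hessenberg n x n matrices with subdiagonal entries
   equal to s, zeros below the subdiagonal, and entries in P on and above
   the diagonal. Indices are 0-based ('I_n). *)
Definition hessG (R : realFieldType) (s : R) (P : R -> Prop) (n : nat)
  (A : 'M[R]_n) : Prop :=
  forall i j : 'I_n,
    ((i : nat) = j.+1 -> A i j = s) /\
    ((j.+1 < i)%N -> A i j = 0) /\
    ((i <= j)%N -> P (A i j)).

Definition itv0t (R : realFieldType) (t : R) : R -> Prop :=
  fun x => 0 <= x <= t.

(* M is M_n: for n >= 1 the maximum of |det A| over G_s^{n x n}([0,t]);
   M_0 := 1. *)
Definition isMn (R : realFieldType) (s t : R) (n : nat) (M : R) : Prop :=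
  if n is 0 then M = 1 else
  (exists A : 'M[R]_n, hessG s (itv0t t) A /\ `|\det A| = M) /\
  (forall A : 'M[R]_n, hessG s (itv0t t) A -> `|\det A| <= M).

Fixpoint Kseq (R : realFieldType) (s t : R) (n : nat) {struct n} : R :=
  match n with
  | 0 => 1
  | S n1 =>
    match n1 with
    | 0 => t
    | S n2 =>
      match n2 with
      | 0 => t ^+ 2
      | S _ => t * Kseq s t n1 + s ^+ 2 * Kseq s t n2
      end
    end
  end.

(* Main.v *)
Require Import Defs.
From mathcomp Require Import all_boot all_order all_algebra.
From mathcomp Require Import ring lra.
Import Order.TTheory GRing.Theory Num.Theory.
Local Open Scope ring_scope.
Set Implicit Arguments. Unset Strict Implicit.

Fixpoint Xs (R : realFieldType) (tau : R) (k : nat) : R :=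
  match k with
  | 0 => 0
  | S k1 => match k1 with
            | 0 => 1
            | S k2 => tau * Xs tau k1 + Xs tau k2
            end
  end.

Lemma Xs_mono (R : realFieldType) (tau : R) : 1 <= tau ->
  forall k, 0 <= Xs tau k <= Xs tau k.+1.
Proof.
move=> ht; elim=> [|k IH] /=; first by rewrite lexx ler01.
case: k IH => [|k] /= IH; first by nra.
case/andP: IH => h1 h2; apply/andP; split; nra.
Qed.

Lemma KseqS (R : realFieldType) (s t : R) k :
  Kseq s t k.+3 = t * Kseq s t k.+2 + s ^+ 2 * Kseq s t k.+1.
Proof. by []. Qed.
Lemma XsS (R : realFieldType) (tau : R) k :
  Xs tau k.+2 = tau * Xs tau k.+1 + Xs tau k.
Proof. by []. Qed.

Lemma Kseq_Xs (R : realFieldType) (s t : R) : 0 < s ->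
  forall k, Kseq s t k.+1 = s ^+ k.+1 * (t / s) * Xs (t / s) k.+1.
Proof.
move=> hs.
have ht : t = (t / s) * s by rewrite divfK // gt_eqF.
set tau := t / s in ht *; clearbody tau.
suff H : forall k, Kseq s t k.+1 = s ^+ k.+1 * tau * Xs tau k.+1 /\
                   Kseq s t k.+2 = s ^+ k.+2 * tau * Xs tau k.+2 by move=> k; case: (H k).
elim=> [|k [IH1 IH2]].
  by split => /=; rewrite ht; ring.
split => //.
rewrite KseqS XsS IH1 IH2 ht !exprS; ring.
Qed.
Definition Ppos (R : realFieldType) (v : nat -> R) k := \sum_(r < k) (if 0 <= v r then v r else 0).
Definition Pneg (R : realFieldType) (v : nat -> R) k := \sum_(r < k) (if 0 <= v r then 0 else - v r).

Lemma bnd (R : realFieldType) (s t : R) (n : nat) (a : nat -> nat -> R) (v : nat -> R) :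
  (forall c, (c < n)%N -> s * v c.+1 = - \sum_(r < c.+1) a r c * v r) ->
  (forall r c, (r <= c)%N -> (c < n)%N -> 0 <= a r c <= t) ->
  forall c, (c < n)%N -> s * v c.+1 <= t * Pneg v c.+1 /\ - (s * v c.+1) <= t * Ppos v c.+1.
Proof.
move=> hrel ha c hc; rewrite hrel // opprK /Ppos /Pneg !mulr_sumr -sumrN; split.
- apply: ler_sum => i _.
  have /andP[h0 h1] := ha i c (ltn_ord i) hc.
  rewrite -mulrN; case: ifP => hv; nra.
- apply: ler_sum => i _.
  have /andP[h0 h1] := ha i c (ltn_ord i) hc.
  case: ifP => hv; first nra.
  have : v i < 0 by rewrite ltNge hv.
  nra.
Qed.

Lemma PposS (R : realFieldType) (v : nat -> R) k :
  Ppos v k.+1 = Ppos v k + (if 0 <= v k then v k else 0).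
Proof. by rewrite /Ppos big_ord_recr. Qed.
Lemma PnegS (R : realFieldType) (v : nat -> R) k :
  Pneg v k.+1 = Pneg v k + (if 0 <= v k then 0 else - v k).
Proof. by rewrite /Pneg big_ord_recr. Qed.

Lemma vbound (R : realFieldType) (s t : R) (hs : 0 < s) (hst : s <= t)
  (n : nat) (a : nat -> nat -> R) (v : nat -> R) :
  v 0%N = 1 ->
  (forall c, (c < n.+1)%N -> s * v c.+1 = - \sum_(r < c.+1) a r c * v r) ->
  (forall r c, (r <= c)%N -> (c < n.+1)%N -> 0 <= a r c <= t) ->
  `|v n.+1| <= (t / s) * Xs (t / s) n.+1.
Proof.
move=> hv0 hrel ha.
have ht : t = (t / s) * s by rewrite divfK // gt_eqF.
have htau : 1 <= t / s by rewrite ler_pdivlMr // mul1r.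
set tau := t / s in ht htau *; clearbody tau.
have hb := bnd hrel ha.
have hb' : forall c, (c < n.+1)%N -> v c.+1 <= tau * Pneg v c.+1 /\ - v c.+1 <= tau * Ppos v c.+1.
  move=> c hc; have [h1 h2] := hb c hc; rewrite ht in h1 h2; split; nra.
have hX := Xs_mono htau.
have inv : forall k, (k < n.+1)%N -> [/\ Ppos v k.+1 <= Xs tau k.+1, Pneg v k.+1 <= Xs tau k.+1 &
      (Ppos v k.+1 <= Xs tau k \/ Pneg v k.+1 <= Xs tau k)].
  elim=> [|k IH] hk.
    rewrite /Ppos /Pneg !big_ord1 /= hv0.
    rewrite ler01.
    by split; [rewrite lexx | rewrite ler01 | right; rewrite lexx].
  have [IH1 IH2 IH3] := IH (ltnW hk).
  have [b1 b2] := hb' k (ltnW hk).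
  have /andP[X0 X1] := hX k.
  have /andP[X0' X1'] := hX k.+1.
  rewrite PposS PnegS XsS.
  have [hv|hv] := lerP 0 (v k.+1).
    rewrite addr0; split.
    - by case: IH3 => IH3; nra.
    - nra.
    - by right; nra.
  rewrite addr0; split.
  - nra.
  - by case: IH3 => IH3; nra.
  - by left; nra.
have [i1 i2 _] := inv n (ltnSn n).
have [b1 b2] := hb' n (ltnSn n).
have /andP[X0 X1] := hX n.+1.
rewrite ler_norml; apply/andP; split; nra.
Qed.
Lemma vexists (R : realFieldType) (s : R) (hs : s != 0) (a : nat -> nat -> R) k :
  exists v : nat -> R, v 0%N = 1 /\
    forall c, (c < k)%N -> s * v c.+1 = - \sum_(r < c.+1) a r c * v r.
Proof.
elim: k => [|k [v [hv0 hv]]]; first by exists (fun _ => 1).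
exists (fun j => if j == k.+1 then - (\sum_(r < k.+1) a r k * v r) / s else v j).
split => // c hc.
have hsum : \sum_(r < c.+1) a r c * (if (r : nat) == k.+1 then - (\sum_(r < k.+1) a r k * v r) / s else v r)
   = \sum_(r < c.+1) a r c * v r.
  apply: eq_bigr => r _.
  have : (r < k.+1)%N by apply: leq_trans (ltn_ord r) hc.
  by rewrite ltn_neqAle => /andP[/negbTE -> _].
rewrite hsum.
case: (ltngtP c k) => hck.
- have -> : (c.+1 == k.+1) = false by rewrite eqSS ltn_eqF.
  exact: hv.
- by move: hc; rewrite ltnS leqNgt hck.
- by rewrite hck eqxx mulrC divfK.
Qed.

Lemma det_hess (R : realFieldType) (s : R) m (A : 'M[R]_m.+1) (v : nat -> R) :
  (forall i j : 'I_m.+1, (i : nat) = j.+1 -> A i j = s) ->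
  (forall i j : 'I_m.+1, (j.+1 < i)%N -> A i j = 0) ->
  v 0%N = 1 ->
  (forall c, (c < m.+1)%N -> s * v c.+1 = - \sum_(r < c.+1) A (inord r) (inord c) * v r) ->
  \det A = - s * v m.+1 * ((-1) ^+ m * s ^+ m).
Proof.
move=> hsub hzero hv0 hrel.
pose U : 'M[R]_m.+1 := \matrix_(i, j) (if i == ord0 then v j else (i == j)%:R).
have dU : \det U = 1.
  rewrite -det_tr det_trig.
    rewrite big1 // => i _; rewrite !mxE.
    by case: eqP => [->|_]; rewrite ?hv0 ?eqxx.
  apply/forallP => i; apply/forallP => j; apply/implyP => hij; rewrite !mxE.
  have -> : (j == ord0) = false.
    by apply/negbTE; apply/eqP => hj; move: hij; rewrite hj.
  have -> : (j == i) = false by apply/eqP => e; move: hij; rewrite e ltnn.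
  by [].
have -> : \det A = \det (U *m A) by rewrite det_mulmx dU mul1r.
have row0 : forall j : 'I_m.+1, (U *m A) ord0 j = \sum_(k < m.+1) v k * A (inord k) (inord j).
  move=> j; rewrite mxE; apply: eq_bigr => k _; by rewrite !mxE eqxx !inord_val.
have rowS : forall (i : 'I_m.+1) j, i != ord0 -> (U *m A) i j = A i j.
  move=> i j hi; rewrite mxE (bigD1 i) //= big1 ?addr0.
    by rewrite !mxE (negbTE hi) eqxx mul1r.
  by move=> k hk; rewrite !mxE (negbTE hi) eq_sym (negbTE hk) mul0r.
have r0a : forall j : 'I_m.+1, (j < m)%N -> (U *m A) ord0 j = 0.
  move=> j hj; rewrite row0 -(big_mkord xpredT (fun k => v k * A (inord k) (inord j))).
  rewrite (big_cat_nat (n:=j.+2)) //=.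
  rewrite [X in _ + X]big_nat_cond [X in _ + X]big1 ?addr0; last first.
    move=> k; case/andP => /andP [h1 h2] _; rewrite hzero ?mulr0 //.
    by rewrite !inordK // (leq_trans (ltn_ord j)).
  rewrite big_nat_recr //= hsub; last by rewrite !inordK // (leq_trans hj).
  have := hrel j (ltn_ord j).
  rewrite big_mkord.
  under eq_bigr => k _ do rewrite mulrC.
  move=> h; lra.
have r0b : forall j : 'I_m.+1, (j : nat) = m -> (U *m A) ord0 j = - (s * v m.+1).
  move=> j hj; rewrite row0 hrel // opprK; apply: eq_bigr => k _; by rewrite mulrC hj.
rewrite (expand_det_row _ ord0) big_ord_recr /= big1 ?add0r; last first.
  move=> j _; rewrite r0a ?mul0r //; exact: (ltn_ord j).
set B := U *m A in rowS r0a r0b *.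
clearbody B.
have dm : \det (row' ord0 (col' ord_max B)) = s ^+ m.
  rewrite -det_tr det_trig.
    rewrite (eq_bigr (fun _ => s)) ?prodr_const ?card_ord // => i _.
    rewrite !mxE rowS; last by rewrite eq_sym neq_lift.
    by apply: hsub; rewrite lift0 lift_max.
  apply/forallP => i; apply/forallP => j; apply/implyP => hij; rewrite !mxE.
  rewrite rowS; last by rewrite eq_sym neq_lift.
  by apply/eqP; apply: hzero; rewrite lift0 lift_max.
rewrite r0b // /cofactor dm /= add0n; ring.
Qed.

Lemma fin_ineq (R : realFieldType) (s S x tau X : R) :
  0 < s -> 0 < S -> x <= tau * X -> s * x * S <= s * S * tau * X.
Proof.
move=> hs hS hx.
have h := ler_wpM2l (ltW (mulr_gt0 hs hS)) hx.
have e1 : s * x * S = s * S * x by ring.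
have e2 : s * S * tau * X = s * S * (tau * X) by ring.
by rewrite e1 e2.
Qed.

Theorem lemma3p5 (R : realFieldType) (s t : R) (hs : 0 < s) (hst : s <= t)
  (n : nat) (M : R) :
  isMn s t n M -> M <= Kseq s t n.
Proof.
case: n => [/= -> //|m [[A [hA <-]] _]].
have hs0 : s != 0 by rewrite gt_eqF.
have [v [hv0 hrel]] := vexists hs0 (fun r c => A (inord r) (inord c)) m.+1.
have hdet := det_hess (A := A) (fun i j h => proj1 (hA i j) h)
   (fun i j h => proj1 (proj2 (hA i j)) h) hv0 hrel.
have hb := @vbound R s t hs hst m (fun r c => A (inord r) (inord c)) v hv0 hrel.
have hb' : `|v m.+1| <= t / s * Xs (t / s) m.+1.
  apply: hb => r c hrc hc.
  have := proj2 (proj2 (hA (inord r) (inord c))).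
  rewrite /itv0t !inordK //; last by apply: leq_ltn_trans hc.
  by apply.
rewrite Kseq_Xs // hdet !normrM normrN normrX normrN normr1 expr1n mul1r normrX.
rewrite (ger0_norm (ltW hs)) exprS.
have hsm : 0 < s ^+ m by rewrite exprn_gt0.
exact: fin_ineq hs hsm hb'.
Qed.
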